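(* Let $F \subseteq \mathbb{Z}_2^\omega$ be a thin set. Then Ego has no winning strategy in the game $\mathcal{G}(F)$.
   Context: $\mathbb{Z}_2^\omega$ is the set of infinite binary sequences indexed by $\omega=\{0,1,2,\dots\}$; $\mathbb{Z}_2^+=\bigcup_{n\ge1}\mathbb{Z}_2^n$ is the set of nonempty finite binary words. A set $T\subseteq\mathbb{Z}_2^\omega$ is thin if for every $n\in\omega$ the map $x\mapsto x|_{\omega\setminus\{n\}}$ is injective on $T$ (equivalently, no two distinct elements of $T$ differ in exactly one coordinate). For $F\subseteq \mathbb{Z}_2^\omega$, $\mathcal{G}(F)$ is the following infinite two-player game of perfect information: players Ego and Alter alternately choose words in $\mathbb{Z}_2^+$, Ego moving first; if the moves are $\epsilon_0,\alpha_1,\epsilon_1,\alpha_2,\epsilon_2,\dots$, the outcome is the concatenation $\epsilon_0\alpha_1\epsilon_1\alpha_2\epsilon_2\cdots\in\mathbb{Z}_2^\omega$. Ego wins if the outcome lies in $F$, otherwise Alter wins. A strategy for Ego is a function $e:\bigcup_{n\ge0}(\mathbb{Z}_2^+)^n\to\mathbb{Z}_2^+$ (giving $\epsilon_0=e(\emptyset)$, $\epsilon_i=e(\alpha_1,\dots,\alpha_i)$), and a strategy for Alter is a function $a:\bigcup_{n\ge1}(\mathbb{Z}_2^+)^n\to\mathbb{Z}_2^+$ (giving $\alpha_i=a(\epsilon_0,\dots,\epsilon_{i-1})$). A strategy of Ego is winning if every play in which Ego follows it has outcome in $F$; a strategy of Alter is winning if every play in which Alter follows it has outcome not in $F$. 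*)

(* Defs.v *)
From mathcomp Require Import all_boot.
Set Implicit Arguments. Unset Strict Implicit. Unset Printing Implicit Defensive.

Definition cantor := nat -> bool.

Definition word := {w : seq bool | 0 < size w}.

(* thin: no two distinct elements differ in exactly one coordinate, i.e.
   for each n, x |-> x restricted to omega\{n} is injective on T. *)
Definition thin (T : cantor -> Prop) : Prop :=
  forall (n : nat) (x y : cantor), T x -> T y ->
    (forall m, m <> n -> x m = y m) -> x = y.

Definition ego_strategy := seq word -> word.

(* Given Ego's strategy e and Alter's moves alpha : nat -> word
   (alpha i is alpha_{i+1}), the i-th Ego move eps_i = e(alpha_1,...,alpha_i). *)
Definition ego_move (e : ego_strategy) (alpha : nat -> word) (i : nat) : word :=
  e (mkseq alpha i).

Definition moves (e : ego_strategy) (alpha : nat -> word) (k : nat) : seq bool :=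
  if odd k then val (alpha k./2) else val (ego_move e alpha k./2).

(* The outcome: the infinite concatenation of all moves.  Since every move is
   nonempty, the first n+1 moves already have length >= n+1. *)
Definition outcome_of (w : nat -> seq bool) : cantor :=
  fun n => nth false (flatten (mkseq w n.+1)) n.

Definition ego_outcome (e : ego_strategy) (alpha : nat -> word) : cantor :=
  outcome_of (moves e alpha).

(* e is winning for Ego in G(F): every play where Ego follows e ends in F.
   Plays consistent with e are exactly determined by Alter's moves alpha. *)
Definition ego_winning (F : cantor -> Prop) (e : ego_strategy) : Prop :=
  forall alpha : nat -> word, F (ego_outcome e alpha).

(* Main.v *)
Require Import Defs.
From mathcomp Require Import all_boot.
From mathcomp Require Import zify.

Lemma size_flat_mk (w : nat -> seq bool) :
  (forall k, 0 < size (w k)) -> forall m, m <= size (flatten (mkseq w m)).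
Proof.
move=> hw; elim=> [|m IH] //.
rewrite mkseqS flatten_rcons size_cat.
by rewrite -addn1; exact: leq_add IH (hw m).
Qed.

Lemma outcome_nth (w : nat -> seq bool) :
  (forall k, 0 < size (w k)) -> forall n m, n < m ->
  outcome_of w n = nth false (flatten (mkseq w m)) n.
Proof.
move=> hw n; elim=> [|m IH] //; rewrite ltnS leq_eqVlt => /orP [/eqP<-|hm] //.
rewrite mkseqS flatten_rcons nth_cat IH //.
by rewrite (leq_trans hm (@size_flat_mk w hw m)).
Qed.

Section Play.
Variable e : ego_strategy.

Definition w0 : word := exist _ [:: false] erefl.
Definition cons1 (w : word) : word := exist _ (true :: val w) erefl.

Fixpoint st (k : nat) : seq word * seq word :=
  match k with
  | 0 => ([:: w0], [:: cons1 (e [:: w0])])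
  | k.+1 => let (la, lb) := st k in
            let la' := rcons la (e lb) in (la', rcons lb (e la'))
  end.

Lemma st_size k : size (st k).1 = k.+1 /\ size (st k).2 = k.+1.
Proof.
elim: k => [|k IH] //=; case: (st k) IH => la lb /= [h1 h2].
by rewrite !size_rcons h1 h2.
Qed.

Lemma stS1 k : (st k.+1).1 = rcons (st k).1 (e (st k).2).
Proof. by rewrite /=; case: (st k). Qed.
Lemma stS2 k : (st k.+1).2 = rcons (st k).2 (e (st k.+1).1).
Proof. by rewrite stS1 /=; case: (st k). Qed.

Definition alA j := nth w0 (st j).1 j.
Definition alB j := nth w0 (st j).2 j.

Lemma st_pref k : forall m j, j <= k -> j <= m ->
  nth w0 (st m).1 j = nth w0 (st k).1 j /\ nth w0 (st m).2 j = nth w0 (st k).2 j.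
Proof.
suff H : forall m j, j <= m -> nth w0 (st m).1 j = alA j /\ nth w0 (st m).2 j = alB j.
  move=> m j hk hm; have [a1 a2] := H m j hm; have [b1 b2] := H k j hk.
  by rewrite a1 a2 b1 b2.
move=> m j; elim: m => [|m IH].
  by rewrite leqn0 => /eqP ->.
rewrite leq_eqVlt => /orP [/eqP ->|hj] //.
have [s1 s2] := st_size m.
rewrite stS2 stS1 !nth_rcons s1 s2 hj.
exact: IH.
Qed.

Lemma mkA k : mkseq alA k.+1 = (st k).1.
Proof.
have [s1 _] := st_size k.
apply: (@eq_from_nth _ w0); first by rewrite size_mkseq s1.
move=> j; rewrite size_mkseq => hj; rewrite nth_mkseq //.
by have [->] := st_pref j k j (leqnn j) hj.
Qed.

Lemma mkB k : mkseq alB k.+1 = (st k).2.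
Proof.
have [_ s2] := st_size k.
apply: (@eq_from_nth _ w0); first by rewrite size_mkseq s2.
move=> j; rewrite size_mkseq => hj; rewrite nth_mkseq //.
by have [_ ->] := st_pref j k j (leqnn j) hj.
Qed.

Lemma alA0 : alA 0 = w0. Proof. by []. Qed.
Lemma alB0 : alB 0 = cons1 (e [:: w0]). Proof. by []. Qed.
Lemma alAS k : alA k.+1 = e (st k).2.
Proof. have [s1 _] := st_size k. by rewrite /alA stS1 nth_rcons s1 ltnn eqxx. Qed.
Lemma alBS k : alB k.+1 = e (st k.+1).1.
Proof. have [_ s2] := st_size k. by rewrite /alB stS2 nth_rcons s2 ltnn eqxx. Qed.

Fixpoint P (k : nat) : seq bool :=
  match k with 0 => [::] | k.+1 => P k ++ val (e (st k).1) ++ val (e (st k).2) end.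

Lemma size_P k : k.*2 <= size (P k).
Proof.
elim: k => [|k IH] //=; rewrite !size_cat doubleS -addn2 leq_add //.
case: (e (st k).1) => a /= ha; case: (e (st k).2) => b /= hb.
by rewrite -addn1 leq_add.
Qed.


Lemma mv_even w k : moves e w k.*2 = val (e (mkseq w k)).
Proof. by rewrite /moves odd_double doubleK. Qed.
Lemma mv_odd w k : moves e w k.*2.+1 = val (w k).
Proof. by rewrite /moves /= odd_double /= uphalf_double. Qed.

Lemma mv_even2 w k : moves e w k.*2.+2 = val (e (mkseq w k.+1)).
Proof. by rewrite -doubleS mv_even. Qed.
Lemma mv_odd2 w k : moves e w k.*2.+3 = val (w k.+1).
Proof. by rewrite -doubleS mv_odd. Qed.

Lemma flatA k : flatten (mkseq (moves e alA) k.*2.+2) = val (e [::]) ++ false :: P k.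
Proof.
elim: k => [|k IH].
  by [].
rewrite doubleS mkseqS mkseqS !flatten_rcons IH mv_even2 mv_odd2 mkA alAS /=.
by rewrite -!catA.
Qed.

Lemma flatB k : flatten (mkseq (moves e alB) k.*2.+2) =
  val (e [::]) ++ true :: P k ++ val (e (st k).1).
Proof.
elim: k => [|k IH].
  by rewrite /mkseq /moves /= cats0.
rewrite doubleS mkseqS mkseqS !flatten_rcons IH mv_even2 mv_odd2 mkB alBS /=.
by rewrite -!catA /= -!catA.
Qed.

End Play.

Lemma moves_ne e w k : 0 < size (moves e w k).
Proof. by rewrite /moves; case: ifP => _; case: (w _) => // ; case: (ego_move _ _ _). Qed.

Theorem proposition6 (F : cantor -> Prop) :
  thin F -> ~ exists e : ego_strategy, ego_winning F e.
Proof.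
move=> hF [e he].
set n := size (val (e [::])).
have hlt : forall m, m < m.*2.+2 by move=> m; lia.
have key : forall m, m <> n -> ego_outcome e (alA e) m = ego_outcome e (alB e) m.
  move=> m hm.
  rewrite /ego_outcome !(@outcome_nth _ (moves_ne e _) m (m.*2.+2)) //.
  rewrite flatA flatB !nth_cat -/n.
  case: ltnP => // hmn.
  have hl : n < m by lia.
  rewrite -(subnSK hl) /= nth_cat.
  have hP := size_P e m.
  have -> : m - n.+1 < size (P e m) by lia.
  by [].
have := hF n _ _ (he (alA e)) (he (alB e)) key => /(congr1 (fun x => x n)).
rewrite /ego_outcome !(@outcome_nth _ (moves_ne e _) n (n.*2.+2)) //.
by rewrite flatA flatB !nth_cat -/n ltnn subnn.
Qed.
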